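(* Multiplication (the ternary relation $w=xy$) is uniformly positive existentially definable: (1) over the language $\{0,1,+,R\}$ in the class $\mathcal{N}=\{\mathfrak{N}_p : p \text{ prime}\}$; (2) over the language $\{0,1,+,\mathrm{pos},R\}$ in the class $\mathcal{Z}=\{\mathfrak{Z}_p : p\text{ prime}\}$; (3) over the language $\{0,1,+,\mid,R,T\}$ in the class $\mathcal{D}=\{\mathfrak{D}_p : p\text{ prime}\}$. That is, in each case there is one positive existential formula $\mu(x,y,w)$ of the given language defining $w=xy$ in every structure of the class.
   Context: For a prime $p$, $x\mid_p y$ on $\mathbb{Z}$ means there exists $s\in\mathbb{Z}$ with $y=\pm x p^s$ (same symbol for its restriction to $\mathbb{N}$; $\mathbb{N}$ contains $0$). $\mathfrak{N}_p=(\mathbb{N};0,1,+,\mid_p)$ with $R$ interpreted as $\mid_p$. $\mathfrak{Z}_p=(\mathbb{Z};0,1,+,\mathrm{pos},\mid_p)$ where the unary relation $\mathrm{pos}(x)$ means $x\geq 0$ and $R$ is $\mid_p$. $\mathfrak{D}_p=(\mathbb{Z};0,1,+,\mid,\mid_p,\mathbb{Z}\smallsetminus\{-1,0,1\})$, where $\mid$ is ordinary divisibility, $R$ is $\mid_p$, and the unary predicate $T$ is interpreted as $\mathbb{Z}\smallsetminus\{-1,0,1\}$. *)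

(* Defs.v *)
From Stdlib Require Import ZArith Znumtheory.
Open Scope Z_scope.

(* Variables are de Bruijn-style indices; [tvar 0], [tvar 1], [tvar 2]
   are the free variables x, y, w of the defining formula. *)
Inductive term : Type :=
| tvar (n : nat)
| tzero
| tone
| tadd (a b : term).

(* Positive existential formulas with unary relation symbols from [U]
   and binary relation symbols from [B]: atoms (equalities and relational
   atoms), conjunction, disjunction, existential quantification.
   [Fex f] binds variable index 0 in [f] (other indices shift by one). *)
Inductive pef (U B : Type) : Type :=
| Feq (a b : term)
| Fun (u : U) (a : term)
| Fbin (r : B) (a b : term)
| Fand (f g : pef U B)
| For (f g : pef U B)
| Fex (f : pef U B).
Arguments Feq {U B}.
Arguments Fun {U B}.
Arguments Fbin {U B}.
Arguments For {U B}.
Arguments Fand {U B}.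
Arguments Fex {U B}.

Definition scons {M : Type} (a : M) (e : nat -> M) : nat -> M :=
  fun n => match n with O => a | S m => e m end.

Fixpoint eval_term {M : Type} (z o : M) (add : M -> M -> M)
  (e : nat -> M) (t : term) : M :=
  match t with
  | tvar n => e n
  | tzero => z
  | tone => o
  | tadd a b => add (eval_term z o add e a) (eval_term z o add e b)
  end.

Fixpoint sat {M U B : Type} (z o : M) (add : M -> M -> M)
  (iu : U -> M -> Prop) (ib : B -> M -> M -> Prop)
  (e : nat -> M) (f : pef U B) : Prop :=
  match f with
  | Feq a b => eval_term z o add e a = eval_term z o add e b
  | Fun u a => iu u (eval_term z o add e a)
  | Fbin r a b => ib r (eval_term z o add e a) (eval_term z o add e b)
  | Fand f g => sat z o add iu ib e f /\ sat z o add iu ib e g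
  | For f g => sat z o add iu ib e f \/ sat z o add iu ib e g
  | Fex f => exists a : M, sat z o add iu ib (scons a e) f
  end.

(* On Z: x |_p y iff y = +- x p^s for some integer s.  Splitting s >= 0
   and s < 0 gives the four cases below. *)
Definition divp (p x y : Z) : Prop :=
  exists k : nat,
    y = x * p ^ Z.of_nat k \/ y = - (x * p ^ Z.of_nat k) \/
    x = y * p ^ Z.of_nat k \/ x = - (y * p ^ Z.of_nat k).

Definition divpN (p : Z) (x y : nat) : Prop := divp p (Z.of_nat x) (Z.of_nat y).

Inductive symR : Type := sym_R.
Inductive symPos : Type := sym_pos.
Inductive symT : Type := sym_T.
Inductive symD : Type := sym_div | sym_RD.

Definition formN := pef Empty_set symR.
Definition formZ := pef symPos symR.
Definition formD := pef symT symD.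

Definition satN (p : Z) (e : nat -> nat) (f : formN) : Prop :=
  sat 0%nat 1%nat Nat.add
    (fun (u : Empty_set) (_ : nat) => match u return Prop with end)
    (fun _ x y => divpN p x y) e f.

Definition satZ (p : Z) (e : nat -> Z) (f : formZ) : Prop :=
  sat 0 1 Z.add
    (fun _ x => 0 <= x)
    (fun _ x y => divp p x y) e f.

Definition satD (p : Z) (e : nat -> Z) (f : formD) : Prop :=
  sat 0 1 Z.add
    (fun _ x => ~ (x = -1 \/ x = 0 \/ x = 1))
    (fun r x y => match r with
                  | sym_div => Z.divide x y
                  | sym_RD => divp p x y
                  end) e f.

(* Main.v *)
From Stdlib Require Import PeanoNat.
Module EulerM.
From mathcomp Require Import all_boot.
From mathcomp Require Import cyclic.
Lemma expn_pow a k : expn a k = Stdlib.Arith.PeanoNat.Nat.pow a k.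
Proof. elim: k => [|k IH] //=. by rewrite expnS IH. Qed.
Lemma euler_nat (a n : nat) : (0 < n)%coq_nat -> (0 < a)%coq_nat ->
  (forall d, Stdlib.Arith.PeanoNat.Nat.divide d a -> Stdlib.Arith.PeanoNat.Nat.divide d n -> d = 1%nat) ->
  exists k q, (0 < k)%coq_nat /\ Stdlib.Arith.PeanoNat.Nat.sub (Stdlib.Arith.PeanoNat.Nat.pow a k) 1 = Stdlib.Arith.PeanoNat.Nat.mul q n /\ (1 <= Stdlib.Arith.PeanoNat.Nat.pow a k)%coq_nat.
Proof.
move=> Hn Ha' Hg.
have Hc : coprime a n.
  rewrite /coprime; apply/eqP; apply: Hg.
  - case/dvdnP: (dvdn_gcdl a n) => k Hk. exists k. exact: Hk.
  - case/dvdnP: (dvdn_gcdr a n) => k Hk. exists k. exact: Hk.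
have He := Euler_exp_totient Hc.
have Ha : 0 < a by apply/ltP.
have H1 : 1 <= a ^ totient n by rewrite expn_gt0 Ha.
have He' : (a ^ totient n == 1 %[mod n]) by apply/eqP.
move: He'. rewrite eqn_mod_dvd // => /dvdnP [q Hq].
exists (totient n), q; split; [|split].
- apply/ltP; rewrite totient_gt0; exact/ltP.
- rewrite -expn_pow. exact Hq.
- rewrite -expn_pow. exact/leP.
Qed.
End EulerM.
Require Import Defs.
From Stdlib Require Import ZArith Znumtheory.


From Stdlib Require Import ZArith Znumtheory Lia PeanoNat Setoid Morphisms.
Open Scope Z_scope.

Definition pw (p : Z) (k : nat) : Z := p ^ Z.of_nat k.

Lemma pw_pos p k : 0 < p -> 0 < pw p k.
Proof. intros; unfold pw; apply Z.pow_pos_nonneg; lia. Qed.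
Lemma pw_0 p : pw p 0 = 1. Proof. reflexivity. Qed.
Lemma pw_S p k : pw p (S k) = p * pw p k.
Proof. unfold pw. rewrite Nat2Z.inj_succ, Z.pow_succ_r; lia. Qed.
Lemma pw_add p a b : pw p (a + b) = pw p a * pw p b.
Proof. unfold pw. rewrite Nat2Z.inj_add, Z.pow_add_r; lia. Qed.
Lemma pw_ge p k : 2 <= p -> (1 <= k)%nat -> p <= pw p k.
Proof. intros Hp Hk. destruct k as [|k]; [lia|]. rewrite pw_S.
  pose proof (pw_pos p k). nia. Qed.
Lemma pw_inj p a b : 2 <= p -> pw p a = pw p b -> a = b.
Proof. unfold pw; intros Hp H. apply Z.pow_inj_r in H; lia. Qed.
Lemma pw_lt p a b : 2 <= p -> (a < b)%nat -> 2 * pw p a <= pw p b.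
Proof. intros Hp H. replace b with (a + S (b - a - 1))%nat by lia.
  rewrite pw_add. pose proof (pw_ge p (S (b-a-1)) Hp). pose proof (pw_pos p a). nia. Qed.
Lemma pw_gt p k : 2 <= p -> Z.of_nat k < pw p k.
Proof. intros Hp. induction k. unfold pw; simpl; lia. rewrite pw_S, Nat2Z.inj_succ. nia. Qed.

Lemma prime_ge2 p : prime p -> 2 <= p.
Proof. intros H; apply prime_ge_2 in H; lia. Qed.
Lemma prime_not_div1 p : prime p -> ~ (p | 1).
Proof. intros H Hd. apply prime_ge2 in H. apply Z.divide_1_r in Hd. lia. Qed.
Lemma prime_div_S p x : prime p -> (p | x) -> ~ (p | x + 1).
Proof. intros H H1 H2. apply (prime_not_div1 p H).
  replace 1 with ((x+1) - x) by lia. apply Z.divide_sub_r; auto. Qed.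


Lemma G0_sound p x u w : prime p -> 1 <= x -> ~ (p | x) -> x <= w ->
  (exists a, u = pw p a) ->
  (exists k, w = x * pw p k \/ x = w * pw p k) ->
  (exists k, w + u = (x+1) * pw p k \/ x + 1 = (w + u) * pw p k) ->
  w = x * u.
Proof.
  intros Hp Hx Hnd Hxw [a Ha] [s Hs] [t Ht].
  pose proof (prime_ge2 p Hp) as Hp2.
  assert (Hw : w = x * pw p s).
  { destruct Hs as [Hs|Hs]; auto. destruct s as [|s].
    - rewrite pw_0 in *. lia.
    - pose proof (pw_ge p (S s) Hp2 ltac:(lia)). 
      assert (w * pw p (S s) >= w * 2) by (apply Z.le_ge, Z.mul_le_mono_nonneg_l; lia). lia. }
  pose proof (pw_pos p a ltac:(lia)) as Hpa.
  assert (Hwu : w + u = (x+1) * pw p t).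
  { destruct Ht as [Ht|Ht]; auto. destruct t as [|t].
    - rewrite pw_0 in *. lia.
    - pose proof (pw_ge p (S t) Hp2 ltac:(lia)).
      assert ((w+u) * pw p (S t) >= (w+u) * 2) by (apply Z.le_ge, Z.mul_le_mono_nonneg_l; lia). lia. }
  subst u w.
  destruct (lt_eq_lt_dec t s) as [[Hts|Hts]|Hts].
  - pose proof (pw_lt p t s Hp2 Hts). pose proof (pw_pos p t ltac:(lia)).
    assert (x * pw p s >= x * (2 * pw p t)) by (apply Z.le_ge, Z.mul_le_mono_nonneg_l; lia).
    assert (x * pw p t >= pw p t) by nia. lia.
  - subst t. assert (pw p a = pw p s) by lia. apply pw_inj in H; auto. subst; lia.
  - exfalso. destruct (Nat.lt_exists_pred 0 (t - s)) as [d [Hd _]]; [lia|].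
    assert (Ht' : t = (s + S d)%nat) by lia. subst t. clear Hd Hts Ht.
    destruct (le_lt_dec a s) as [Has|Has].
    + destruct (Nat.le_exists_sub a s Has) as [e [He _]]. subst s.
      replace (e + a)%nat with (a + e)%nat in * by lia.
      rewrite !pw_add, pw_S in Hwu.
      assert (Hc : x * pw p e + 1 = (x * pw p e + pw p e) * (p * pw p d)).
      { apply (Z.mul_reg_l _ _ (pw p a)). lia.
        apply eq_trans with (x * (pw p a * pw p e) + pw p a); [ring|]. rewrite Hwu. ring. }
      destruct e as [|e].
      * rewrite pw_0 in Hc. pose proof (pw_pos p d ltac:(lia)).
        assert ((x*1+1) * (p * pw p d) >= (x*1+1) * 2) by (apply Z.le_ge, Z.mul_le_mono_nonneg_l; nia). lia.
      * apply (prime_not_div1 p Hp).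
        replace 1 with ((x * pw p (S e) + pw p (S e)) * (p * pw p d) - x * pw p (S e)) by lia.
        apply Z.divide_sub_r.
        -- exists ((x * pw p (S e) + pw p (S e)) * pw p d). ring.
        -- rewrite pw_S. exists (x * pw p e). ring.
    + destruct (Nat.lt_exists_pred 0 (a - s)) as [f [Hf _]]; [lia|].
      assert (Ha' : a = (s + S f)%nat) by lia. subst a. clear Hf Has.
      rewrite !pw_add, !pw_S in Hwu.
      assert (Hc : x + p * pw p f = (x + 1) * (p * pw p d)).
      { apply (Z.mul_reg_l _ _ (pw p s)); [pose proof (pw_pos p s); lia|].
        apply eq_trans with (x * pw p s + pw p s * (p * pw p f)); [ring|]. rewrite Hwu. ring. }
      apply Hnd. exists ((x+1) * pw p d - pw p f). lia.
Qed.

Fixpoint lift (t : term) : term :=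
  match t with tvar n => tvar (S n) | tadd a b => tadd (lift a) (lift b) | t => t end.
Lemma eval_lift {M} (z o : M) add e a t :
  eval_term z o add (scons a e) (lift t) = eval_term z o add e t.
Proof. induction t; simpl; congruence. Qed.

Definition dv (p x y : Z) : Prop := exists k, y = x * pw p k \/ x = y * pw p k.

Lemma divp_nonneg p x y : 0 < p -> 0 <= x -> 0 <= y -> divp p x y <-> dv p x y.
Proof.
  intros Hp Hx Hy. unfold divp, dv. split; intros [k Hk]; exists k.
  - pose proof (pw_pos p k Hp) as Hq. unfold pw in *. destruct Hk as [H|[H|[H|H]]]; [left|left|right|right]; nia.
  - destruct Hk; [left|right; right; left]; auto.
Qed.

Definition G0s p (x u w : Z) := dv p 1 u /\ dv p x w /\ dv p (x+1) (w+u) /\ x <= w.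

Lemma dv1 p u : 0 < p -> 0 <= u -> dv p 1 u <-> exists a, u = pw p a.
Proof. intros Hp Hu. split.
  - intros [k [H|H]]. exists k; lia. exists 0%nat. rewrite pw_0. pose proof (pw_pos p k Hp). nia.
  - intros [a H]. exists a. left; lia. Qed.

Lemma G0_complete p x a : 0 < p -> 0 <= x -> G0s p x (pw p a) (x * pw p a).
Proof. intros Hp Hx. pose proof (pw_pos p a Hp). repeat split.
  - exists a; left; ring.
  - exists a; left; ring.
  - exists a; left; ring.
  - nia. Qed.

Lemma G_sound p x u w : prime p -> 0 <= x -> 0 <= u -> G0s p x u w -> G0s p (x+1) u (w+u) ->
  (exists a, u = pw p a) /\ w = x * u.
Proof.
  intros Hp Hx Hu [H1 [H2 [H3 H4]]] [_ [H2x [H3x H4x]]].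
  pose proof (prime_ge2 p Hp).
  assert (Ha : exists a, u = pw p a) by (apply dv1; auto; lia).
  split; auto.
  destruct (Zdivide_dec p x) as [Hd|Hd].
  - assert (Hn := prime_div_S p x Hp Hd).
    assert (w + u = (x+1) * u); [|lia].
    apply G0_sound with p; auto; lia.
  - assert (x <> 0) by (intro; subst; apply Hd; apply Z.divide_0_r).
    apply G0_sound with p; auto; lia.
Qed.

Lemma geom (u : Z) (j : nat) : 1 <= u ->
  exists S, S * (u - 1) = u ^ Z.of_nat j - 1 /\ (u - 1 | S - Z.of_nat j) /\ Z.of_nat j <= S.
Proof.
  intros Hu. induction j as [|j [S [H1 [H2 H3]]]].
  - exists 0. simpl. split; [lia|]. split; [apply Z.divide_0_r|lia].
  - exists (u * S + 1). rewrite Nat2Z.inj_succ, Z.pow_succ_r by lia. split; [|split].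
    + nia.
    + replace (u * S + 1 - Z.succ (Z.of_nat j)) with ((u - 1) * S + (S - Z.of_nat j)) by lia.
      apply Z.divide_add_r; auto. exists S; ring.
    + nia.
Qed.

Lemma geom_div (u : Z) (j : nat) : 1 <= u -> (u - 1 | u ^ Z.of_nat j - 1).
Proof. intros Hu. destruct (geom u j Hu) as [S [H _]]. exists S. lia. Qed.

Lemma pow_div p m n : 2 <= p -> (1 <= m)%nat -> (pw p m - 1 | pw p n - 1) ->
  exists j, n = (m * j)%nat.
Proof.
  intros Hp Hm Hd.
  pose (j := (n / m)%nat). pose (r := (n mod m)%nat).
  assert (Hn : n = (m * j + r)%nat) by (apply Nat.div_mod; lia).
  assert (Hr : (r < m)%nat) by (apply Nat.mod_upper_bound; lia).
  exists j.
  assert (Hpr : pw p n - 1 = pw p r * (pw p m ^ Z.of_nat j - 1) + (pw p r - 1)).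
  { rewrite Hn, pw_add. unfold pw. rewrite <- Z.pow_mul_r by lia. rewrite Nat2Z.inj_mul. ring. }
  assert (Hd2 : (pw p m - 1 | pw p r - 1)).
  { replace (pw p r - 1) with ((pw p n - 1) - pw p r * (pw p m ^ Z.of_nat j - 1)) by lia.
    apply Z.divide_sub_r; auto. apply Z.divide_mul_r. apply geom_div.
    pose proof (pw_pos p m); lia. }
  destruct r as [|r'].
  - lia.
  - exfalso. pose proof (pw_lt p (S r') m Hp Hr). pose proof (pw_ge p (S r') Hp ltac:(lia)).
    apply Z.divide_pos_le in Hd2; lia.
Qed.

Lemma pw_mul p m j : pw p (m * j) = pw p m ^ Z.of_nat j.
Proof. unfold pw. rewrite Nat2Z.inj_mul, Z.pow_mul_r; lia. Qed.

Lemma E_sound p k u v A q m n : 2 <= p -> u = pw p m -> v = pw p n -> 0 <= k -> k + 2 <= u ->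
  A * u + 1 = A + v -> A + q = k + q * u ->
  exists j, v = pw p (m * j) /\ (u - 1 | Z.of_nat j - k).
Proof.
  intros Hp Hu Hv Hk Hku HA Hq.
  assert (Hm : (1 <= m)%nat) by (destruct m; [rewrite pw_0 in Hu; lia | lia]).
  destruct (pow_div p m n Hp Hm) as [j Hj].
  { exists A. subst. lia. }
  exists j. subst n. split; [subst; auto|].
  destruct (geom u j ltac:(lia)) as [S [H1 [H2 H3]]].
  rewrite Hu, <- pw_mul, <- Hu, <- Hv in H1.
  assert (S = A). { apply (Z.mul_reg_r _ _ (u - 1)); lia. }
  subst S.
  replace (Z.of_nat j - k) with ((A - k) - (A - Z.of_nat j)) by lia.
  apply Z.divide_sub_r; auto. exists q. lia.
Qed.

Lemma E_complete p m j : 2 <= p -> (1 <= m)%nat ->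
  exists A q, 0 <= A /\ 0 <= q /\ A * pw p m + 1 = A + pw p (m * j) /\
    A + q = Z.of_nat j + q * pw p m.
Proof.
  intros Hp Hm. pose proof (pw_ge p m Hp Hm).
  destruct (geom (pw p m) j ltac:(lia)) as [S [H1 [[q Hq] H3]]].
  rewrite <- pw_mul in H1.
  exists S, q. assert (0 <= q).
  { nia. }
  split; [lia|split;[auto|split]]; nia.
Qed.

Lemma mod_eq_small (M a b : Z) : (M | a - b) -> 0 <= a < M -> 0 <= b < M -> a = b.
Proof.
  intros [c Hc] Ha Hb.
  assert (c = 0) by nia. subst. lia.
Qed.

Lemma mainN_sound p m j1 j2 j3 nv (x y z u v w u' : Z) : 2 <= p ->
  0 <= x -> 0 <= y -> 0 <= z -> u = pw p m -> (1 <= m)%nat ->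
  v = pw p (m * j1) -> (u - 1 | Z.of_nat j1 - x) ->
  v = pw p nv -> w = pw p (nv * j2) -> (v - 1 | Z.of_nat j2 - y) ->
  w = pw p (m * j3) -> (u - 1 | Z.of_nat j3 - z) ->
  z + 2 <= u -> y < u' -> x * u' + 2 <= u -> z = x * y.
Proof.
  intros Hp Hx Hy Hz Hu Hm Hv1 Hd1 Hv2 Hw1 Hd2 Hw2 Hd3 Hzu Hyu Htu.
  assert (nv = (m * j1)%nat) by (apply (pw_inj p); auto; congruence). subst nv.
  assert (Hj : j3 = (j1 * j2)%nat).
  { assert (m * j3 = m * j1 * j2)%nat by (apply (pw_inj p); auto; congruence). nia. }
  subst j3.
  assert (Huv : (u - 1 | v - 1)).
  { rewrite Hv1, pw_mul, <- Hu. apply geom_div. pose proof (pw_pos p m); lia. }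
  assert (Hd2' : (u - 1 | Z.of_nat j2 - y)) by (eapply Z.divide_trans; eauto).
  apply mod_eq_small with (u - 1).
  - replace (z - x * y) with (- (Z.of_nat (j1 * j2) - z) + (Z.of_nat j1 * (Z.of_nat j2 - y) + y * (Z.of_nat j1 - x)))
      by (rewrite Nat2Z.inj_mul; ring).
    apply Z.divide_add_r; [apply Z.divide_opp_r; auto|].
    apply Z.divide_add_r; apply Z.divide_mul_r; auto.
  - lia.
  - nia.
Qed.

Notation evN e t := (eval_term 0%nat 1%nat Nat.add e t).

Lemma sN_ex p e f : satN p e (Fex f) <-> exists a, satN p (scons a e) f. Proof. reflexivity. Qed.
Lemma sN_and p e f g : satN p e (Fand f g) <-> satN p e f /\ satN p e g. Proof. reflexivity. Qed.
Lemma sN_or p e f g : satN p e (For f g) <-> satN p e f \/ satN p e g. Proof. reflexivity. Qed.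
Lemma sN_eq p e a b : satN p e (Feq a b) <-> evN e a = evN e b. Proof. reflexivity. Qed.
Lemma sN_R p e a b : satN p e (Fbin sym_R a b) <-> divpN p (evN e a) (evN e b). Proof. reflexivity. Qed.

Definition LEf {U} (a b : term) : pef U symR := Fex (Feq (tadd (lift a) (tvar 0)) (lift b)).
Definition G0f {U} (x u w : term) : pef U symR :=
  Fand (Fbin sym_R tone u) (Fand (Fbin sym_R x w) (Fand (Fbin sym_R (tadd x tone) (tadd w u)) (LEf x w))).
Definition Gf {U} (x u w : term) : pef U symR := Fand (G0f x u w) (G0f (tadd x tone) u (tadd w u)).

Lemma LE_semN p e a b : satN p e (LEf a b) <-> (evN e a <= evN e b)%nat.
Proof. unfold LEf. rewrite sN_ex. setoid_rewrite sN_eq. simpl. setoid_rewrite eval_lift.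
  split. intros [c H]; lia. intros H; exists (evN e b - evN e a)%nat; lia. Qed.

Lemma divpN_dv p x y : 0 < p -> divpN p x y <-> dv p (Z.of_nat x) (Z.of_nat y).
Proof. intros; apply divp_nonneg; lia. Qed.

Lemma G0_semN p e x u w : 0 < p -> satN p e (G0f x u w) <->
  G0s p (Z.of_nat (evN e x)) (Z.of_nat (evN e u)) (Z.of_nat (evN e w)).
Proof. intros Hp. unfold G0f, G0s. rewrite !sN_and, !sN_R, LE_semN, !(divpN_dv p) by auto.
  simpl. rewrite !Nat2Z.inj_add. simpl. split; intros; intuition lia. Qed.

Lemma G_semN p e x u w : prime p -> satN p e (Gf x u w) <->
  (exists a, Z.of_nat (evN e u) = pw p a) /\ evN e w = (evN e x * evN e u)%nat.
Proof. intros Hp. pose proof (prime_ge2 p Hp). unfold Gf. rewrite sN_and, !G0_semN by lia. simpl.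
  rewrite !Nat2Z.inj_add. simpl. split.
  - intros [H1 H2]. destruct (G_sound p _ _ _ Hp (Nat2Z.is_nonneg _) (Nat2Z.is_nonneg _) H1 H2) as [Ha Hw].
    split; auto. lia.
  - intros [[a Ha] Hw]. rewrite Hw, Nat2Z.inj_mul, Ha. split.
    + apply G0_complete; lia.
    + replace (Z.of_nat (evN e x) * pw p a + pw p a) with ((Z.of_nat (evN e x) + 1) * pw p a) by ring.
      apply G0_complete; lia.
Qed.

Fixpoint liftn (n : nat) (t : term) : term := match n with O => t | S n => lift (liftn n t) end.
Lemma liftn_var n k : liftn n (tvar k) = tvar (n + k).
Proof. induction n; simpl; auto. rewrite IHn. reflexivity. Qed.
Lemma liftn_add n a b : liftn n (tadd a b) = tadd (liftn n a) (liftn n b).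
Proof. induction n; simpl; auto. rewrite IHn. reflexivity. Qed.
Lemma liftn_zero n : liftn n tzero = tzero. Proof. induction n; simpl; auto. rewrite IHn; auto. Qed.
Lemma liftn_one n : liftn n tone = tone. Proof. induction n; simpl; auto. rewrite IHn; auto. Qed.
Lemma eval_liftn {M} (z o : M) add n (e : nat -> M) t f :
  (forall i, f (n + i)%nat = e i) -> eval_term z o add f (liftn n t) = eval_term z o add e t.
Proof.
  intros Hf. induction t.
  - rewrite liftn_var. simpl. apply Hf.
  - rewrite liftn_zero. reflexivity.
  - rewrite liftn_one. reflexivity.
  - rewrite liftn_add. simpl. congruence.
Qed.

Definition Ef (k u v : term) : formN :=
  let k4 := liftn 4 k in let u4 := liftn 4 u in let v4 := liftn 4 v in
  let A := tvar 3 in let B := tvar 2 in let q := tvar 1 in let C := tvar 0 in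
  Fex (Fex (Fex (Fex
    (Fand (Gf A u4 B) (Fand (Feq (tadd B tone) (tadd A v4))
    (Fand (Gf q u4 C) (Fand (Feq (tadd A q) (tadd k4 C))
    (Fand (Fbin sym_R tone v4) (LEf (tadd k4 (tadd tone tone)) u4))))))))).

Definition Esem p (K U V : nat) : Prop :=
  exists A q : nat, (exists a, Z.of_nat U = pw p a) /\ (A * U + 1 = A + V)%nat /\
    (A + q = K + q * U)%nat /\ (exists b, Z.of_nat V = pw p b) /\ (K + 2 <= U)%nat.

Lemma dv1N p u : 0 < p -> dv p 1 (Z.of_nat u) <-> exists a, Z.of_nat u = pw p a.
Proof. intros; apply dv1; lia. Qed.

Lemma Ef_semN p e k u v : prime p -> satN p e (Ef k u v) <-> Esem p (evN e k) (evN e u) (evN e v).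
Proof.
  intros Hp. pose proof (prime_ge2 p Hp). unfold Ef, Esem.
  repeat setoid_rewrite sN_ex. repeat setoid_rewrite sN_and.
  setoid_rewrite (fun e x u w => G_semN p e x u w Hp). setoid_rewrite sN_eq. setoid_rewrite sN_R.
  setoid_rewrite LE_semN. setoid_rewrite (divpN_dv p); [|lia].
  simpl. setoid_rewrite (eval_liftn _ _ _ 4 e); try reflexivity.
  setoid_rewrite (dv1N p); try lia.
  split.
  - intros [A [B [q [C [[Ha HB] [HB2 [[_ HC] [HC2 [Hv Hk]]]]]]]]].
    exists A, q. split; auto. split; [lia|]. split; [lia|]. auto.
  - intros [A [q [Ha [H1 [H2 [Hv Hk]]]]]].
    exists A, (A * evN e u)%nat, q, (q * evN e u)%nat. intuition lia.
Qed.

Lemma Esem_sound p K U V : prime p -> Esem p K U V ->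
  exists m j, Z.of_nat U = pw p m /\ (1 <= m)%nat /\ Z.of_nat V = pw p (m * j) /\
    (Z.of_nat U - 1 | Z.of_nat j - Z.of_nat K) /\ (K + 2 <= U)%nat.
Proof.
  intros Hp [A [q [[a Ha] [H1 [H2 [[b Hb] Hk]]]]]].
  pose proof (prime_ge2 p Hp).
  destruct (E_sound p (Z.of_nat K) (Z.of_nat U) (Z.of_nat V) (Z.of_nat A) (Z.of_nat q) a b)
    as [j [Hj1 Hj2]]; auto; try lia.
  exists a, j. repeat split; auto.
  destruct a; [rewrite pw_0 in Ha; lia| lia].
Qed.

Lemma pw_nat p k : 0 < p -> exists n : nat, Z.of_nat n = pw p k.
Proof. intros. exists (Z.to_nat (pw p k)). rewrite Z2Nat.id; auto. pose proof (pw_pos p k); lia. Qed.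

Lemma Esem_complete p K U V m : prime p -> (1 <= m)%nat -> Z.of_nat U = pw p m ->
  Z.of_nat V = pw p (m * K) -> (K + 2 <= U)%nat -> Esem p K U V.
Proof.
  intros Hp Hm HU HV Hk. pose proof (prime_ge2 p Hp).
  destruct (E_complete p m K ltac:(lia) Hm) as [A [q [HA [Hq [H1 H2]]]]].
  exists (Z.to_nat A), (Z.to_nat q). repeat split.
  - exists m; auto.
  - apply Nat2Z.inj. rewrite Nat2Z.inj_add, Nat2Z.inj_mul, Nat2Z.inj_add, Z2Nat.id, HU, HV; lia.
  - apply Nat2Z.inj. rewrite !Nat2Z.inj_add, Nat2Z.inj_mul, !Z2Nat.id, HU; lia.
  - exists (m * K)%nat; auto.
  - auto.
Qed.

Definition muN : formN :=
  let x := tvar 5 in let y := tvar 6 in let z := tvar 7 in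
  let u := tvar 4 in let v := tvar 3 in let w := tvar 2 in let u' := tvar 1 in let t := tvar 0 in
  For (Fand (Feq (tvar 0) tzero) (Feq (tvar 2) tzero))
    (Fex (Fex (Fex (Fex (Fex
      (Fand (Ef x u v) (Fand (Ef y v w) (Fand (Ef z u w)
      (Fand (Fbin sym_R tone u') (Fand (LEf (tadd y tone) u')
      (Fand (Gf x u' t) (LEf (tadd t (tadd tone tone)) u)))))))))))).

Lemma muN_spec p e : prime p -> satN p e muN <-> e 2%nat = (e 0%nat * e 1%nat)%nat.
Proof.
  intros Hp. pose proof (prime_ge2 p Hp). unfold muN.
  rewrite sN_or. repeat setoid_rewrite sN_ex. repeat setoid_rewrite sN_and.
  setoid_rewrite (fun e x u w => G_semN p e x u w Hp).
  setoid_rewrite (fun e k u v => Ef_semN p e k u v Hp).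
  setoid_rewrite sN_eq. setoid_rewrite sN_R.
  setoid_rewrite LE_semN. setoid_rewrite (divpN_dv p); [|lia].
  setoid_rewrite (dv1N p); try lia.
  simpl. split.
  - intros [[H1 H2]|[u [v [w [u' [t [E1 [E2 [E3 [[a Ha] [Hy [[_ Ht] Htu]]]]]]]]]]]].
    + rewrite H1, H2. reflexivity.
    + apply Esem_sound in E1, E2, E3; auto.
      destruct E1 as [m [j1 [Hu [Hm [Hv [Hd1 Hx]]]]]].
      destruct E2 as [nv [j2 [Hv2 [Hnv [Hw [Hd2 Hyv]]]]]].
      destruct E3 as [m' [j3 [Hu' [Hm' [Hw' [Hd3 Hz]]]]]].
      assert (m' = m) by (apply (pw_inj p); auto; congruence). subst m'.
      apply Nat2Z.inj. rewrite Nat2Z.inj_mul.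
      apply (mainN_sound p m j1 j2 j3 nv _ _ _ (Z.of_nat u) (Z.of_nat v) (Z.of_nat w) (Z.of_nat u'));
        auto; try lia.
  - intros Hz. destruct (Nat.eq_dec (e 0%nat) 0) as [H0|H0]; [left; lia|right].
    set (x := e 0%nat) in *. set (y := e 1%nat) in *.
    destruct (pw_nat p y ltac:(lia)) as [u' Hu'].
    pose proof (pw_gt p y ltac:(lia)) as Hyu. rewrite <- Hu' in Hyu.
    assert (Hxu : (x <= x * u')%nat) by nia.
    assert (Hxy : (y <= x * y)%nat) by nia.
    set (M := (x * u' + x * y + 3)%nat).
    assert (HM : M = (x * u' + x * y + 3)%nat) by reflexivity. clearbody M.
    destruct (pw_nat p M ltac:(lia)) as [u Hu].
    destruct (pw_nat p (M * x) ltac:(lia)) as [v Hv].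
    destruct (pw_nat p (M * x * y) ltac:(lia)) as [w Hw].
    pose proof (pw_gt p M ltac:(lia)) as HuM. rewrite <- Hu in HuM.
    pose proof (pw_gt p (M * x) ltac:(lia)) as HvM. rewrite <- Hv in HvM.
    assert (M * x >= M)%nat by nia.
    exists u, v, w, u', (x * u')%nat. split; [|split; [|split; [|split; [|split]]]].
    + apply Esem_complete with M; auto; lia.
    + apply Esem_complete with (M * x)%nat; auto; lia.
    + apply Esem_complete with M; auto; try lia. rewrite Hz, Hw. f_equal. lia.
    + exists y; auto.
    + lia.
    + split; [split; [exists y; auto|lia] | lia].
Qed.

Fixpoint tfv (k : nat) (t : term) : bool :=
  match t with tvar n => Nat.ltb n k | tadd a b => tfv k a && tfv k b | _ => true end.
Fixpoint ffv {U B} (k : nat) (f : pef U B) : bool :=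
  match f with
  | Feq a b => tfv k a && tfv k b
  | Fun _ a => tfv k a
  | Fbin _ a b => tfv k a && tfv k b
  | Fand f g => ffv k f && ffv k g
  | For f g => ffv k f && ffv k g
  | Fex f => ffv (S k) f
  end.

Lemma eval_ext {M} (z o : M) add k e e' t : tfv k t = true -> (forall n, (n < k)%nat -> e n = e' n) ->
  eval_term z o add e t = eval_term z o add e' t.
Proof.
  intros Ht He. induction t; simpl in *; auto.
  - apply He. apply Nat.ltb_lt; auto.
  - apply andb_prop in Ht. destruct Ht. rewrite IHt1, IHt2; auto.
Qed.

Lemma sat_ext {M U B} (z o : M) add iu ib (f : pef U B) : forall k e e', ffv k f = true ->
  (forall n, (n < k)%nat -> e n = e' n) -> (sat z o add iu ib e f <-> sat z o add iu ib e' f).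
Proof.
  induction f; intros k e e' Hf He; simpl in *.
  - apply andb_prop in Hf as [H1 H2]. rewrite (eval_ext z o add k e e' a), (eval_ext z o add k e e' b); auto. reflexivity.
  - rewrite (eval_ext z o add k e e' a); auto. reflexivity.
  - apply andb_prop in Hf as [H1 H2]. rewrite (eval_ext z o add k e e' a), (eval_ext z o add k e e' b); auto. reflexivity.
  - apply andb_prop in Hf as [H1 H2]. rewrite (IHf1 k e e'), (IHf2 k e e'); auto. reflexivity.
  - apply andb_prop in Hf as [H1 H2]. rewrite (IHf1 k e e'), (IHf2 k e e'); auto. reflexivity.
  - split; intros [a Ha]; exists a.
    + rewrite <- (IHf (S k) (scons a e) (scons a e')); auto. intros [|n] Hn; simpl; auto. apply He; lia.
    + rewrite (IHf (S k) (scons a e) (scons a e')); auto. intros [|n] Hn; simpl; auto. apply He; lia.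
Qed.

Fixpoint trZ (f : formN) : formZ :=
  match f with
  | Feq a b => Feq a b
  | Fun u _ => match u with end
  | Fbin _ a b => Fbin sym_R a b
  | Fand f g => Fand (trZ f) (trZ g)
  | For f g => For (trZ f) (trZ g)
  | Fex f => Fex (Fand (Fun sym_pos (tvar 0)) (trZ f))
  end.

Lemma eval_NZ (e : nat -> nat) (e' : nat -> Z) t : (forall n, e' n = Z.of_nat (e n)) ->
  eval_term 0 1 Z.add e' t = Z.of_nat (evN e t).
Proof. intros He. induction t; simpl; auto. rewrite IHt1, IHt2, Nat2Z.inj_add; auto. Qed.

Lemma trZ_correct p (f : formN) : forall e e', (forall n, e' n = Z.of_nat (e n)) ->
  (satN p e f <-> satZ p e' (trZ f)).
Proof.
  induction f; intros e e' He; unfold satN, satZ in *; simpl.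
  - rewrite !(eval_NZ e e'); auto. lia.
  - destruct u.
  - rewrite !(eval_NZ e e'); auto. reflexivity.
  - rewrite (IHf1 e e'), (IHf2 e e'); auto. reflexivity.
  - rewrite (IHf1 e e'), (IHf2 e e'); auto. reflexivity.
  - split.
    + intros [a Ha]. exists (Z.of_nat a). split; [lia|].
      apply (IHf (scons a e) (scons (Z.of_nat a) e')); auto. intros [|n]; simpl; auto.
    + intros [a [Ha0 Ha]]. exists (Z.to_nat a).
      apply (IHf (scons (Z.to_nat a) e) (scons a e')); auto. intros [|n]; simpl; auto. lia.
Qed.

Lemma muN_fv : ffv 3 (trZ muN) = true. Proof. reflexivity. Qed.

Definition muZ : formZ :=
  let a := tvar 0 in let b := tvar 1 in let c := tvar 2 in
  let x := tvar 3 in let y := tvar 4 in let z := tvar 5 in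
  Fex (Fex (Fex (Fand (Fun sym_pos a) (Fand (Fun sym_pos b) (Fand (Fun sym_pos c)
   (Fand
     (For (Fand (Feq x a) (Fand (Feq y b) (Feq z c)))
     (For (Fand (Feq (tadd x a) tzero) (Fand (Feq (tadd y b) tzero) (Feq z c)))
     (For (Fand (Feq x a) (Fand (Feq (tadd y b) tzero) (Feq (tadd z c) tzero)))
          (Fand (Feq (tadd x a) tzero) (Fand (Feq y b) (Feq (tadd z c) tzero))))))
     (trZ muN))))))).

Lemma muZ_spec p e : prime p -> satZ p e muZ <-> e 2%nat = (e 0%nat * e 1%nat)%Z.
Proof.
  intros Hp.
  assert (Hin : forall a b c, 0 <= a -> 0 <= b -> 0 <= c ->
    (satZ p (scons a (scons b (scons c e))) (trZ muN) <-> c = a * b)).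
  { intros a b c Ha Hb Hc.
    set (env := scons a (scons b (scons c e))).
    unfold satZ. rewrite (sat_ext _ _ _ _ _ _ 3 env (fun n => Z.of_nat (Z.to_nat (env n))) muN_fv).
    2:{ intros [|[|[|n]]] Hn; simpl; lia. }
    change (satZ p (fun n => Z.of_nat (Z.to_nat (env n))) (trZ muN) <-> c = a * b).
    rewrite <- (trZ_correct p muN (fun n => Z.to_nat (env n))) by reflexivity.
    rewrite muN_spec by auto. simpl. split; intros H.
    - apply (f_equal Z.of_nat) in H. rewrite Nat2Z.inj_mul, !Z2Nat.id in H; auto.
    - subst c. rewrite Z2Nat.inj_mul; auto. }
  unfold satZ in Hin. unfold muZ, satZ. cbn [sat eval_term scons].
  split.
  - intros [c [b [a [Ha [Hb [Hc [Hs Hm]]]]]]].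
    apply Hin in Hm; auto. subst c.
    destruct Hs as [[H1 [H2 H3]]|[[H1 [H2 H3]]|[[H1 [H2 H3]]|[H1 [H2 H3]]]]]; nia.
  - intros Hz. exists (Z.abs (e 2%nat)), (Z.abs (e 1%nat)), (Z.abs (e 0%nat)).
    split; [lia|split;[lia|split;[lia|split]]].
    + rewrite Hz. destruct (Z.le_ge_cases 0 (e 0%nat)), (Z.le_ge_cases 0 (e 1%nat)).
      * left. rewrite Z.abs_mul. lia.
      * right; right; left. rewrite Z.abs_mul. nia.
      * right; right; right. rewrite Z.abs_mul. nia.
      * right; left. rewrite Z.abs_mul. nia.
    + apply Hin; try lia; rewrite Hz, Z.abs_mul; ring.
Qed.

Lemma sign_cases s : s * s = 1 -> s = 1 \/ s = -1.
Proof. intros. nia. Qed.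

Lemma divp_sign p x y : divp p x y ->
  exists k s, s * s = 1 /\ (y = s * x * pw p k \/ x = s * y * pw p k).
Proof. intros [k [H|[H|[H|H]]]]; exists k.
  - exists 1. split; [lia|left; unfold pw; lia].
  - exists (-1). split; [lia|left; unfold pw in *; lia].
  - exists 1. split; [lia|right; unfold pw; lia].
  - exists (-1). split; [lia|right; unfold pw in *; lia].
Qed.

Lemma R1_sign p u : 0 < p -> divp p 1 u -> exists a s, s * s = 1 /\ u = s * pw p a.
Proof. intros Hp H. apply divp_sign in H as [k [s [Hs [H|H]]]].
  - exists k, s. split; auto. lia.
  - pose proof (pw_pos p k Hp). exists 0%nat, s. rewrite pw_0. split; auto.
    assert (Hu : u * (s * pw p k) = 1) by lia.
    assert (Z.abs u * Z.abs (s * pw p k) = 1) by (rewrite <- Z.abs_mul, Hu; reflexivity).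
    rewrite Z.abs_mul in H1. assert (Z.abs s = 1) by nia.
    assert (Z.abs u = 1) by nia. nia.
Qed.

Lemma divp_div p x y : 0 < p -> x <> 0 -> (x | y) -> divp p x y ->
  exists k s, s * s = 1 /\ y = s * x * pw p k.
Proof. intros Hp Hx Hd H. apply divp_sign in H as [k [s [Hs [H|H]]]].
  - exists k, s; auto.
  - exists 0%nat, s. split; auto. rewrite pw_0.
    assert (Hy : y <> 0) by (intro; subst; lia).
    pose proof (pw_pos p k Hp).
    apply Z.divide_abs_l, Z.divide_abs_r, Z.divide_pos_le in Hd; [|lia].
    assert (Ha : Z.abs x = Z.abs y * pw p k).
    { rewrite H, !Z.abs_mul, (Z.abs_eq (pw p k)) by lia.
      destruct (sign_cases s Hs) as [-> | ->]; [change (Z.abs 1) with 1|change (Z.abs (-1)) with 1]; ring. }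
    assert (Hk : pw p k = 1) by nia. rewrite Hk in H. destruct (sign_cases s Hs) as [-> | ->]; lia.
Qed.

Lemma vp_eq p a r X Y : prime p -> ~ (p | X) -> ~ (p | Y) -> pw p a * X = pw p r * Y -> a = r /\ X = Y.
Proof.
  intros Hp HX HY H. pose proof (prime_ge2 p Hp).
  destruct (lt_eq_lt_dec a r) as [[Har|Har]|Har].
  - exfalso. replace r with (a + S (r - a - 1))%nat in H by lia. rewrite pw_add, pw_S in H.
    assert (X = p * pw p (r - a - 1) * Y).
    { apply (Z.mul_reg_l _ _ (pw p a)); [pose proof (pw_pos p a); lia|]. rewrite H. ring. }
    apply HX. exists (pw p (r - a - 1) * Y). lia.
  - subst. split; auto. apply (Z.mul_reg_l _ _ (pw p r)); [pose proof (pw_pos p r); lia|]. auto.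
  - exfalso. replace a with (r + S (a - r - 1))%nat in H by lia. rewrite pw_add, pw_S in H.
    assert (Y = p * pw p (a - r - 1) * X).
    { apply (Z.mul_reg_l _ _ (pw p r)); [pose proof (pw_pos p r); lia|]. rewrite <- H. ring. }
    apply HY. exists (pw p (a - r - 1) * X). lia.
Qed.

Lemma pw_le_exp p a b : 2 <= p -> pw p a <= pw p b -> (a <= b)%nat.
Proof. intros Hp H. destruct (le_lt_dec a b); auto. pose proof (pw_lt p b a Hp l). pose proof (pw_pos p b). lia. Qed.

Lemma p_div_sign p s x : s * s = 1 -> (p | s * x) -> (p | x).
Proof. intros Hs H. replace x with (s * (s * x)) by (rewrite Z.mul_assoc, Hs; ring). apply Z.divide_mul_r; auto. Qed.

Lemma ndiv_shift p s a t : prime p -> (1 <= a)%nat -> s * s = 1 -> t * t = 1 -> ~ (p | t * (s * pw p a + 1)).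
Proof.
  intros Hp Ha Hs Ht H. apply p_div_sign in H; auto. apply (prime_not_div1 p Hp).
  replace 1 with ((s * pw p a + 1) - s * pw p a) by ring. apply Z.divide_sub_r; auto.
  destruct a; [lia|]. rewrite pw_S. exists (s * pw p a); ring.
Qed.
Lemma ndiv_shift' p s a t : prime p -> (1 <= a)%nat -> s * s = 1 -> t * t = 1 -> ~ (p | t * (s * pw p a - 1)).
Proof.
  intros Hp Ha Hs Ht H. apply p_div_sign in H; auto. apply (prime_not_div1 p Hp).
  replace 1 with (s * pw p a - (s * pw p a - 1)) by ring. apply Z.divide_sub_r; auto.
  destruct a; [lia|]. rewrite pw_S. exists (s * pw p a); ring.
Qed.
Lemma ndiv_sum p d c s : prime p -> (1 <= c)%nat -> s * s = 1 -> ~ (p | d * pw p c + s).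
Proof.
  intros Hp Hc Hs H. apply (prime_not_div1 p Hp). rewrite <- Hs. apply Z.divide_mul_r.
  replace s with ((d * pw p c + s) - d * pw p c) by ring. apply Z.divide_sub_r; auto.
  destruct c; [lia|]. rewrite pw_S. exists (d * pw p c); ring.
Qed.

Lemma PS_sound p u v d1 d2 : prime p ->
  divp p 1 u -> ~ (u = -1 \/ u = 0 \/ u = 1) -> divp p 1 v -> (u | v) ->
  (u + 1 | v + u) -> divp p (u + 1) (v + u) ->
  d1 + 1 = u -> d2 + u = v -> (d1 | d2) -> divp p d1 d2 ->
  v = u * u /\ exists a s, (1 <= a)%nat /\ s * s = 1 /\ u = s * pw p a.
Proof.
  intros Hp Hu HT Hv Huv Hd Hr H1 H2 Hd' Hr'.
  pose proof (prime_ge2 p Hp).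
  destruct (R1_sign p u ltac:(lia) Hu) as [a [e [He Hue]]].
  destruct (R1_sign p v ltac:(lia) Hv) as [b [d [Hd0 Hvd]]].
  assert (Ha : (1 <= a)%nat) by (destruct a; [rewrite pw_0 in Hue; destruct (sign_cases e He); lia | lia]).
  pose proof (pw_pos p a ltac:(lia)) as Hpa.
  assert (Hab : (a <= b)%nat).
  { apply (pw_le_exp p); auto. assert (v <> 0) by (destruct (sign_cases d Hd0); pose proof (pw_pos p b); lia).
    apply Z.divide_abs_l, Z.divide_abs_r, Z.divide_pos_le in Huv; [|lia].
    rewrite Hue, Hvd in Huv. pose proof (pw_pos p b ltac:(lia)).
    destruct (sign_cases e He) as [-> | ->]; destruct (sign_cases d Hd0) as [-> | ->]; lia. }
  destruct (divp_div p (u+1) (v+u) ltac:(lia) ltac:(lia) Hd Hr) as [r [t [Ht Hvr]]].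
  destruct (divp_div p d1 d2 ltac:(lia) ltac:(lia) Hd' Hr') as [r' [t' [Ht' Hvr']]].
  split; [|exists a, e; auto].
  destruct (Nat.eq_dec a b) as [Heq|Hne].
  - exfalso. subst b. pose proof (pw_pos p r ltac:(lia)). pose proof (pw_pos p r' ltac:(lia)).
    destruct (sign_cases e He) as [-> | ->]; destruct (sign_cases d Hd0) as [-> | ->];
    destruct (sign_cases t Ht) as [-> | ->]; destruct (sign_cases t' Ht') as [-> | ->]; nia.
  - set (c := (b - a)%nat). assert (Hb : b = (a + c)%nat) by lia. rewrite Hb, pw_add in Hvd.
    assert (Hc : (1 <= c)%nat) by lia.
    assert (E1 : pw p a * (d * pw p c + e) = pw p r * (t * (e * pw p a + 1))) by (rewrite <- Hue; nia).
    assert (E2 : pw p a * (d * pw p c - e) = pw p r' * (t' * (e * pw p a - 1))) by (rewrite <- Hue; nia).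
    apply vp_eq in E1 as [_ E1]; auto.
    2: apply ndiv_sum; auto.
    2: apply ndiv_shift; auto.
    apply vp_eq in E2 as [_ E2]; auto.
    2: { replace (d * pw p c - e) with (d * pw p c + (- e)) by ring. apply ndiv_sum; auto. nia. }
    2: apply ndiv_shift'; auto.
    assert (HQ : d * pw p c = pw p a).
    { destruct (sign_cases e He) as [-> | ->];
      destruct (sign_cases t Ht) as [-> | ->]; destruct (sign_cases t' Ht') as [-> | ->]; lia. }
    rewrite Hvd, Hue. replace (d * (pw p a * pw p c)) with (pw p a * (d * pw p c)) by ring.
    rewrite HQ. destruct (sign_cases e He) as [-> | ->]; ring.
Qed.

Lemma nat_div_Z d a : Nat.divide d a -> (Z.of_nat d | Z.of_nat a).
Proof. intros [z Hz]. exists (Z.of_nat z). rewrite Hz, Nat2Z.inj_mul. reflexivity. Qed.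

Lemma euler_Z p c : prime p -> (p | c - 1) -> exists k, (1 <= k)%nat /\ (c | pw p k - 1).
Proof.
  intros Hp Hc. pose proof (prime_ge2 p Hp).
  assert (Hc0 : c <> 0).
  { intro; subst. apply (prime_not_div1 p Hp). replace 1 with (- (0 - 1)) by ring. apply Z.divide_opp_r; auto. }
  assert (Hcop : forall d, Nat.divide d (Z.to_nat p) -> Nat.divide d (Z.to_nat (Z.abs c)) -> d = 1%nat).
  { intros d Hd1 Hd2.
    apply nat_div_Z in Hd1. apply nat_div_Z in Hd2.
    rewrite Z2Nat.id in Hd1, Hd2 by lia.
    assert (Hd3 : (Z.of_nat d | c)) by (apply Z.divide_abs_r; auto).
    destruct (prime_divisors p Hp (Z.of_nat d) Hd1) as [E|[E|[E|E]]]; try lia.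
    exfalso. apply (prime_not_div1 p Hp). rewrite <- E in Hc.
    replace 1 with (c - (c - 1)) by ring. apply Z.divide_sub_r; rewrite <- E; auto. }
  destruct (EulerM.euler_nat (Z.to_nat p) (Z.to_nat (Z.abs c)) ltac:(lia) ltac:(lia) Hcop) as [k [q [Hk [Hq H1]]]].
  exists k. split; [lia|].
  apply Z.divide_abs_l. 
  assert (Hz : Z.of_nat (Nat.pow (Z.to_nat p) k - 1) = Z.of_nat (q * Z.to_nat (Z.abs c))) by (rewrite Hq; auto).
  rewrite Nat2Z.inj_sub, Nat2Z.inj_pow, Nat2Z.inj_mul, !Z2Nat.id in Hz by lia.
  exists (Z.of_nat q). unfold pw. lia.
Qed.

Lemma euler_Z_large p c (N : nat) : prime p -> (p | c - 1) -> exists n, (N <= n)%nat /\ (1 <= n)%nat /\ (c | pw p n - 1).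
Proof.
  intros Hp Hc. pose proof (prime_ge2 p Hp).
  destruct (euler_Z p c Hp Hc) as [k [Hk Hd]].
  exists (k * S N)%nat. split; [nia|split;[nia|]].
  eapply Z.divide_trans; [apply Hd|]. rewrite pw_mul. apply geom_div. pose proof (pw_pos p k); lia.
Qed.

Lemma LB_sound p K U : 0 < p -> (exists z m, divp p K z /\ (K | z) /\ (z + 1 | m) /\ m + 1 = U /\ ~ (U = -1 \/ U = 0 \/ U = 1)) ->
  Z.abs K <= Z.abs U + 2 /\ 2 <= Z.abs U.
Proof.
  intros Hp [z [m [Hr [Hd [Hm [HU HT]]]]]]. split; [|lia].
  assert (Hz : Z.abs K <= Z.abs z).
  { apply divp_sign in Hr as [k [s [Hs [H|H]]]]; pose proof (pw_pos p k Hp).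
    - rewrite H, !Z.abs_mul, (Z.abs_eq (pw p k)) by lia.
      destruct (sign_cases s Hs) as [-> | ->]; [change (Z.abs 1) with 1|change (Z.abs (-1)) with 1]; nia.
    - destruct (Z.eq_dec z 0) as [E|E].
      + subst. lia.
      + apply Z.divide_abs_l, Z.divide_abs_r, Z.divide_pos_le in Hd; lia. }
  assert (m <> 0) by lia.
  apply Z.divide_abs_l, Z.divide_abs_r, Z.divide_pos_le in Hm; lia.
Qed.

Lemma LB_complete p K (N : nat) : prime p -> exists n, (N <= n)%nat /\ (1 <= n)%nat /\
  exists z m, divp p K z /\ (K | z) /\ (z + 1 | m) /\ m + 1 = pw p n /\ ~ (pw p n = -1 \/ pw p n = 0 \/ pw p n = 1).
Proof.
  intros Hp. pose proof (prime_ge2 p Hp).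
  destruct (euler_Z_large p (K * p + 1) N Hp) as [n [Hn1 [Hn2 Hd]]].
  { exists K; ring. }
  exists n. split; auto. split; auto. exists (K * p), (pw p n - 1). repeat split.
  - exists 1%nat. left. unfold pw. change (Z.of_nat 1) with 1. rewrite Z.pow_1_r. ring.
  - exists p; ring.
  - auto.
  - ring.
  - pose proof (pw_ge p n ltac:(lia) Hn2). lia.
Qed.



Lemma abs_sq z : z * z = Z.abs z * Z.abs z.
Proof. destruct (Z.abs_spec z) as [[_ ->]|[_ ->]]; ring. Qed.

Lemma sq_core' x y u0 u1 u : 2 <= Z.abs u0 -> 2 <= Z.abs u1 ->
  Z.abs (3 * x) <= Z.abs u0 + 2 -> Z.abs (3 * y) <= Z.abs u1 + 2 ->
  Z.abs (2 * (u0 * u0) + 2 * (u1 * u1)) <= Z.abs u + 2 -> (x - u | y - u * u) -> y = x * x.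
Proof.
  intros H0 H1 Hx Hy Hu Hd.
  assert (Hd2 : (x - u | y - x * x)).
  { replace (y - x * x) with ((y - u * u) - (x - u) * (x + u)) by ring.
    apply Z.divide_sub_r; auto. exists (x + u); ring. }
  rewrite Z.abs_mul in Hx, Hy. change (Z.abs 3) with 3 in Hx, Hy.
  assert (Ax : Z.abs x + 1 <= Z.abs u0) by lia.
  assert (Ay : Z.abs y + 1 <= Z.abs u1) by lia.
  assert (S0 : (Z.abs x + 1) * (Z.abs x + 1) <= u0 * u0).
  { rewrite (abs_sq u0). apply Z.mul_le_mono_nonneg; lia. }
  assert (S1 : (Z.abs y + 1) * (Z.abs y + 1) <= u1 * u1).
  { rewrite (abs_sq u1). apply Z.mul_le_mono_nonneg; lia. }
  assert (P0 : 0 <= u0 * u0) by (rewrite (abs_sq u0); apply Z.mul_nonneg_nonneg; lia).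
  assert (P1 : 0 <= u1 * u1) by (rewrite (abs_sq u1); apply Z.mul_nonneg_nonneg; lia).
  rewrite Z.abs_eq in Hu by lia.
  destruct (Z.eq_dec (y - x * x) 0) as [E|E]; [lia|exfalso].
  apply Z.divide_abs_l, Z.divide_abs_r, Z.divide_pos_le in Hd2; [|lia].
  assert (Q : x * x = Z.abs x * Z.abs x) by apply abs_sq.
  set (X2 := x * x) in *. set (U0 := u0 * u0) in *. set (U1 := u1 * u1) in *.
  set (ax := Z.abs x) in *.
  assert (T1 : Z.abs (y - X2) <= Z.abs y + X2).
  { assert (0 <= X2) by (rewrite Q; apply Z.mul_nonneg_nonneg; unfold ax; lia). lia. }
  assert (T2 : Z.abs u - ax <= Z.abs (x - u)) by (unfold ax; lia).
  assert (T3 : (ax + 1) * (ax + 1) = X2 + 2 * ax + 1) by (rewrite Q; ring).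
  assert (T4 : (Z.abs y + 1) * (Z.abs y + 1) >= Z.abs y + 1) by nia.
  assert (0 <= ax) by (unfold ax; lia).
  assert (T5 : Z.abs y + 1 <= U1) by lia.
  rewrite T3 in S0.
  assert (N1 : 0 <= X2) by (rewrite Q; apply Z.mul_nonneg_nonneg; lia).
  assert (N2 : 0 <= Z.abs y) by lia.
  assert (N3 : 0 <= ax) by lia.
  clear -Hd2 T1 T2 Hu S0 T5 N1 N2 N3.
  set (A1 := Z.abs (x - u)) in *. set (A2 := Z.abs (y - X2)) in *. set (A3 := Z.abs u) in *.
  set (A4 := Z.abs y) in *. clearbody A1 A2 A3 A4 ax X2 U0 U1.
  lia.
Qed.

Lemma el2 {M} (z o : M) add a b e t :
  eval_term z o add (scons a (scons b e)) (liftn 2 t) = eval_term z o add e t.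
Proof. apply eval_liftn. reflexivity. Qed.
Lemma el8 {M} (z o : M) add a1 a2 a3 a4 a5 a6 a7 a8 e t :
  eval_term z o add (scons a1 (scons a2 (scons a3 (scons a4 (scons a5 (scons a6 (scons a7 (scons a8 e)))))))) (liftn 8 t) = eval_term z o add e t.
Proof. apply eval_liftn. reflexivity. Qed.

Notation evZ e t := (eval_term 0 1 Z.add e t).
Definition TT (x : Z) : Prop := ~ (x = -1 \/ x = 0 \/ x = 1).

Lemma sD_ex p e f : satD p e (Fex f) <-> exists a, satD p (scons a e) f. Proof. reflexivity. Qed.
Lemma sD_and p e f g : satD p e (Fand f g) <-> satD p e f /\ satD p e g. Proof. reflexivity. Qed.
Lemma sD_eq p e a b : satD p e (Feq a b) <-> evZ e a = evZ e b. Proof. reflexivity. Qed.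
Lemma sD_T p e a : satD p e (Fun sym_T a) <-> TT (evZ e a). Proof. reflexivity. Qed.
Lemma sD_div p e a b : satD p e (Fbin sym_div a b) <-> (evZ e a | evZ e b). Proof. reflexivity. Qed.
Lemma sD_R p e a b : satD p e (Fbin sym_RD a b) <-> divp p (evZ e a) (evZ e b). Proof. reflexivity. Qed.

Definition PSf (u v : term) : formD :=
  Fand (Fbin sym_RD tone u) (Fand (Fun sym_T u) (Fand (Fbin sym_RD tone v) (Fand (Fbin sym_div u v)
  (Fand (Fbin sym_div (tadd u tone) (tadd v u)) (Fand (Fbin sym_RD (tadd u tone) (tadd v u))
  (Fex (Fex (Fand (Feq (tadd (tvar 1) tone) (liftn 2 u)) (Fand (Feq (tadd (tvar 0) (liftn 2 u)) (liftn 2 v))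
    (Fand (Fbin sym_div (tvar 1) (tvar 0)) (Fbin sym_RD (tvar 1) (tvar 0)))))))))))).

Lemma dpos p x y k : y = x * pw p k -> divp p x y.
Proof. intros H; exists k; left; exact H. Qed.
Lemma dneg p x y k : y = - (x * pw p k) -> divp p x y.
Proof. intros H; exists k; right; left; exact H. Qed.

Definition PSs p (u v : Z) : Prop := v = u * u /\ exists a s, (1 <= a)%nat /\ s * s = 1 /\ u = s * pw p a.

Lemma PS_sem p e u v : prime p -> satD p e (PSf u v) <-> PSs p (evZ e u) (evZ e v).
Proof.
  intros Hp. pose proof (prime_ge2 p Hp). unfold PSf.
  repeat setoid_rewrite sD_and. repeat setoid_rewrite sD_ex. repeat setoid_rewrite sD_and.
  setoid_rewrite sD_eq. setoid_rewrite sD_T. setoid_rewrite sD_div. setoid_rewrite sD_R.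
  simpl. setoid_rewrite el2.
  set (U := evZ e u). set (V := evZ e v). split.
  - intros [H1 [H2 [H3 [H4 [H5 [H6 [d1 [d2 [H7 [H8 [H9 H10]]]]]]]]]]].
    eapply PS_sound; eauto.
  - intros [HV [a [s [Ha [Hs HU]]]]]. pose proof (pw_ge p a ltac:(lia) Ha).
    destruct (sign_cases s Hs) as [Es|Es]; subst s; repeat split.
    + apply (dpos _ _ _ a). lia.
    + unfold TT. lia.
    + apply (dpos _ _ _ (a + a)). rewrite HV, HU, pw_add. ring.
    + exists U. lia.
    + exists U. lia.
    + apply (dpos _ _ _ a). rewrite HV, HU. ring.
    + exists (U - 1), (V - U). repeat split; try lia.
      * exists U. rewrite HV; ring.
      * apply (dpos _ _ _ a). rewrite HV, HU. ring.
    + apply (dneg _ _ _ a). lia.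
    + unfold TT. lia.
    + apply (dpos _ _ _ (a + a)). rewrite HV, HU, pw_add. ring.
    + exists U. lia.
    + exists U. lia.
    + apply (dneg _ _ _ a). rewrite HV, HU. ring.
    + exists (U - 1), (V - U). repeat split; try lia.
      * exists U. rewrite HV; ring.
      * apply (dneg _ _ _ a). rewrite HV, HU. ring.
Qed.

Definition LBf (K u : term) : formD :=
  Fex (Fex (Fand (Fbin sym_RD (liftn 2 K) (tvar 1)) (Fand (Fbin sym_div (liftn 2 K) (tvar 1))
    (Fand (Fbin sym_div (tadd (tvar 1) tone) (tvar 0)) (Fand (Feq (tadd (tvar 0) tone) (liftn 2 u))
      (Fun sym_T (liftn 2 u))))))).

Definition LBs p (K U : Z) : Prop :=
  exists z m, divp p K z /\ (K | z) /\ (z + 1 | m) /\ m + 1 = U /\ ~ (U = -1 \/ U = 0 \/ U = 1).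

Lemma LB_sem p e K u : satD p e (LBf K u) <-> LBs p (evZ e K) (evZ e u).
Proof.
  unfold LBf, LBs. repeat setoid_rewrite sD_ex. repeat setoid_rewrite sD_and.
  setoid_rewrite sD_eq. setoid_rewrite sD_T. setoid_rewrite sD_div. setoid_rewrite sD_R.
  simpl. setoid_rewrite el2. reflexivity. all: exact 0.
Qed.

Definition SQf (x y : term) : formD :=
  let x8 := liftn 8 x in let y8 := liftn 8 y in
  let u0 := tvar 7 in let v0 := tvar 6 in let u1 := tvar 5 in let v1 := tvar 4 in
  let u := tvar 3 in let v := tvar 2 in let d1 := tvar 1 in let d2 := tvar 0 in
  Fex (Fex (Fex (Fex (Fex (Fex (Fex (Fex
    (Fand (PSf u0 v0) (Fand (LBf (tadd x8 (tadd x8 x8)) u0)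
    (Fand (PSf u1 v1) (Fand (LBf (tadd y8 (tadd y8 y8)) u1)
    (Fand (PSf u v) (Fand (LBf (tadd (tadd v0 v0) (tadd v1 v1)) u)
    (Fand (Feq (tadd d1 u) x8) (Fand (Feq (tadd d2 v) y8) (Fbin sym_div d1 d2)))))))))))))))).

Lemma PSs_abs p u v : 2 <= p -> PSs p u v -> 2 <= Z.abs u.
Proof. intros Hp [_ [a [s [Ha [Hs Hu]]]]]. pose proof (pw_ge p a Hp Ha).
  destruct (sign_cases s Hs); subst; lia. Qed.

Lemma SQ_sem p e x y : prime p -> satD p e (SQf x y) <-> evZ e y = evZ e x * evZ e x.
Proof.
  intros Hp. pose proof (prime_ge2 p Hp). unfold SQf.
  repeat setoid_rewrite sD_ex. repeat setoid_rewrite sD_and.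
  setoid_rewrite (fun e u v => PS_sem p e u v Hp). setoid_rewrite LB_sem.
  setoid_rewrite sD_eq. setoid_rewrite sD_div.
  simpl. setoid_rewrite el8.
  set (X := evZ e x). set (Y := evZ e y). split.
  - intros [u0 [v0 [u1 [v1 [u [v [d1 [d2 [P0 [L0 [P1 [L1 [P [L [E1 [E2 Hd]]]]]]]]]]]]]]]].
    pose proof (PSs_abs p _ _ H P0). pose proof (PSs_abs p _ _ H P1).
    destruct P0 as [Hv0 _]. destruct P1 as [Hv1 _]. destruct P as [Hv _].
    apply LB_sound in L0; [|lia]. apply LB_sound in L1; [|lia]. apply LB_sound in L; [|lia].
    apply (sq_core' X Y u0 u1 u); try lia.
    replace (X - u) with d1 by lia. replace (Y - u * u) with d2 by lia. auto.
  - intros HY.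
    destruct (LB_complete p (X + (X + X)) 0 Hp) as [n0 [_ [Hn0 L0]]].
    destruct (LB_complete p (Y + (Y + Y)) 0 Hp) as [n1 [_ [Hn1 L1]]].
    set (u0 := pw p n0). set (u1 := pw p n1).
    destruct (LB_complete p (u0 * u0 + u0 * u0 + (u1 * u1 + u1 * u1)) 0 Hp) as [n [_ [Hn L]]].
    set (u := pw p n).
    exists u0, (u0 * u0), u1, (u1 * u1), u, (u * u), (X - u), (Y - u * u).
    repeat split; try (exists n0, 1; split; [auto|split; [ring|unfold u0; ring]]);
      try (exists n1, 1; split; [auto|split; [ring|unfold u1; ring]]);
      try (exists n, 1; split; [auto|split; [ring|unfold u; ring]]); auto; try ring.
    exists (X + u). rewrite HY. ring.
Qed.

Definition muD : formD :=
  let x := tvar 3 in let y := tvar 4 in let z := tvar 5 in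
  let s1 := tvar 2 in let s2 := tvar 1 in let s3 := tvar 0 in
  Fex (Fex (Fex (Fand (SQf (tadd x y) s1) (Fand (SQf x s2) (Fand (SQf y s3)
    (Feq (tadd (tadd z z) (tadd s2 s3)) s1)))))).

Lemma muD_spec p e : prime p -> satD p e muD <-> e 2%nat = (e 0%nat * e 1%nat)%Z.
Proof.
  intros Hp. unfold muD.
  repeat setoid_rewrite sD_ex. repeat setoid_rewrite sD_and.
  setoid_rewrite (fun e x y => SQ_sem p e x y Hp). setoid_rewrite sD_eq. simpl.
  split.
  - intros [s1 [s2 [s3 [H1 [H2 [H3 H4]]]]]]. nia.
  - intros Hz. exists ((e 0%nat + e 1%nat) * (e 0%nat + e 1%nat)), (e 0%nat * e 0%nat), (e 1%nat * e 1%nat).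
    repeat split; try ring. rewrite Hz. ring.
Qed.

Theorem theorem1p13 :
  (exists mu : formN, forall p : Z, prime p ->
     forall e : nat -> nat, satN p e mu <-> e 2%nat = (e 0%nat * e 1%nat)%nat) /\
  (exists mu : formZ, forall p : Z, prime p ->
     forall e : nat -> Z, satZ p e mu <-> e 2%nat = (e 0%nat * e 1%nat)%Z) /\
  (exists mu : formD, forall p : Z, prime p ->
     forall e : nat -> Z, satD p e mu <-> e 2%nat = (e 0%nat * e 1%nat)%Z).
Proof.
  split; [|split].
  - exists muN. intros p Hp e. apply muN_spec; auto.
  - exists muZ. intros p Hp e. apply muZ_spec; auto.
  - exists muD. intros p Hp e. apply muD_spec; auto.
Qed.
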